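(* Let $\mathcal{D}\subseteq\{0,1\}^m$ be nonempty and $c,d\in\mathbb{R}^m$ with $d^\top x>0$ for all $x\in\mathcal{D}$, and let $f(\delta):=\min_{x\in\mathcal{D}}(c-\delta d)^\top x$. Then the look-ahead Newton–Dinkelbach method (described in the context), applied to $f$ with any initial point $\delta^{(1)}$ and supergradient $g^{(1)}\in\partial f(\delta^{(1)})$ satisfying $f(\delta^{(1)})\le 0$ and $g^{(1)}<0$, terminates in $O(m\log m)$ iterations.
   Context: This is the linear fractional combinatorial optimization problem $\min\{c^\top x/d^\top x: x\in\mathcal{D}\}$, whose optimal value is the unique root of $f$. Value and supergradient oracles for $f$ are implemented by a linear optimization oracle over $\mathcal{D}$: for $\delta\in\mathbb{R}$ it returns some $x\in\operatorname{argmin}_{x\in\mathcal{D}}(c-\delta d)^\top x$, giving $f(\delta)=(c-\delta d)^\top x$ and the supergradient $-d^\top x\in\partial f(\delta)$. Here $\partial f(x_0):=\{g: f(x)\le f(x_0)+g(x-x_0)\ \forall x\}$. Look-ahead Newton–Dinkelbach method: input $\delta^{(1)}$, $g^{(1)}\in\partial f(\delta^{(1)})$ with $f(\delta^{(1)})\le0$, $g^{(1)}<0$. For $i=1,2,\dots$: if $f(\delta^{(i)})=0$, return $\delta^{(i)}$. Otherwise set $\delta:=\delta^{(i)}-f(\delta^{(i)})/g^{(i)}$ and query $g\in\partial f(\delta)$; if $f(\delta)=-\infty$, or $f(\delta)<0$ and $g\ge0$, return NO ROOT. Then set $\delta':=2\delta-\delta^{(i)}$ and query $g'\in\partial f(\delta')$;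 if $-\infty<f(\delta')<0$ and $g'<0$, replace $(\delta,g)$ by $(\delta',g')$. Set $\delta^{(i+1)}:=\delta$, $g^{(i+1)}:=g$. *)

(* Defs.v *)
From HB Require Import structures.
From mathcomp Require Import all_boot all_order all_algebra.
From mathcomp Require Import reals exp.
Set Implicit Arguments. Unset Strict Implicit. Unset Printing Implicit Defensive.
Import Order.TTheory GRing.Theory Num.Theory.
Local Open Scope ring_scope.

Section LAND.
Variable R : realType.
Variable m : nat.

Definition bvec := {ffun 'I_m -> bool}.

Definition dotb (a : 'I_m -> R) (x : bvec) : R := \sum_i a i * (x i)%:R.

Definition lfval (c d : 'I_m -> R) (delta : R) (x : bvec) : R :=
  \sum_i (c i - delta * d i) * (x i)%:R.

(* f(delta) = min_{x in D} (c - delta d)^T x  (0 if D is empty; never used) *)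
Definition fmin (D : {set bvec}) (c d : 'I_m -> R) (delta : R) : R :=
  match [pick x in D] with
  | Some x0 => \big[Num.min/lfval c d delta x0]_(x in D) lfval c d delta x
  | None => 0
  end.

Definition is_supergrad (f : R -> R) (x0 g : R) : Prop :=
  forall x, f x <= f x0 + g * (x - x0).

Definition lin_oracle (D : {set bvec}) (c d : 'I_m -> R) (O : R -> bvec) : Prop :=
  forall delta, O delta \in D /\
    forall y, y \in D -> lfval c d delta (O delta) <= lfval c d delta y.

(* Look-ahead Newton--Dinkelbach, with f = fmin D c d and supergradient oracle
   g(delta) = - d^T (O delta).  A state is (delta^(i), g^(i)). *)
Definition LAND_f D c d := fmin D c d.
Definition LAND_g (d : 'I_m -> R) (O : R -> bvec) (delta : R) : R := - dotb d (O delta).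

(* Does iteration i, started in state s, return (a root, or NO ROOT)?
   (f is real valued here, so the case f(delta) = -oo never occurs.) *)
Definition LAND_returns D c d O (s : R * R) : bool :=
  let f := LAND_f D c d in
  (f s.1 == 0) ||
  (let delta := s.1 - f s.1 / s.2 in (f delta < 0) && (0 <= LAND_g d O delta)).

Definition LAND_next D c d O (s : R * R) : R * R :=
  let f := LAND_f D c d in
  let delta := s.1 - f s.1 / s.2 in
  let delta' := 2 * delta - s.1 in
  if (f delta' < 0) && (LAND_g d O delta' < 0) then (delta', LAND_g d O delta')
  else (delta, LAND_g d O delta).

(* state at iteration k+1 (k = 0 is the initial state) *)
Definition LAND_state D c d O (s1 : R * R) (k : nat) : R * R :=
  iter k (LAND_next D c d O) s1.

End LAND.

(* Main.v *)
Require Import Defs.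
From HB Require Import structures.
From mathcomp Require Import all_boot all_order all_algebra.
From mathcomp Require Import reals exp.
From mathcomp Require Import ring lra zify.
From mathcomp Require Import fingroup perm.
Set Implicit Arguments. Unset Strict Implicit. Unset Printing Implicit Defensive.
Import Order.TTheory GRing.Theory Num.Theory.
Local Open Scope ring_scope.
Section Goem.
Variables (R : realType) (m n : nat) (y : nat -> bvec m).

Definition Um : 'M[R]_(n.+1, m) :=
  \matrix_(j, l) ((y j l)%:R - (if (j < n)%N then 2 * (y j.+1 l)%:R else 0)).
Definition bb : 'cV[R]_(n.+1) := \col_j ((j == n :> nat)%:R).
Definition wv : 'rV[R]_m := \row_l (y 0 l)%:R.
Definition lam0 : 'rV[R]_(n.+1) := \row_j (2 ^+ j).
Definition feas (z : 'cV[R]_m) := forall j, bb j 0 <= (Um *m z) j 0.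

Lemma tele (v : nat -> R) :
  \sum_(j < n.+1) 2 ^+ j * (v j - (if (j < n)%N then 2 * v j.+1 else 0)) = v 0%N.
Proof.
under eq_bigr => j _ do rewrite mulrBr.
rewrite sumrB big_ord_recl big_ord_recr /= ltnn mulr0 addr0 expr0 mul1r.
suff -> : \sum_(i < n) 2 ^+ i * (if (i < n)%N then 2 * v i.+1 else 0) =
   \sum_(i < n) 2 ^+ bump 0 i * v (bump 0 i).
  by rewrite addrK.
apply: eq_bigr => j _; rewrite (ltn_ord j) /bump /= add1n exprS.
by rewrite mulrA (mulrC (2 ^+ j)).
Qed.

Lemma w_eq : wv = lam0 *m Um.
Proof.
apply/rowP => l; rewrite !mxE.
rewrite -(tele (fun j => (y j l)%:R)).
by apply: eq_bigr => j _; rewrite !mxE.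
Qed.

Lemma feas_lb z : feas z -> 2 ^+ n <= (wv *m z) 0 0.
Proof.
move=> fz; rewrite w_eq -mulmxA mxE.
have -> : 2 ^+ n = \sum_j lam0 0 j * bb j 0.
  rewrite (bigD1 (ord_max)) //= big1 ?addr0; first by rewrite !mxE eqxx mulr1.
  move=> j /negbTE; rewrite !mxE.
  have -> : (j == n :> nat) = (j == ord_max) by [].
  by move=> ->; rewrite mulr0.
apply: ler_sum => j _; apply: ler_wpM2l; last exact: fz.
by rewrite mxE exprn_ge0.
Qed.

Definition tight (z : 'cV[R]_m) (j : 'I_n.+1) := (Um *m z) j 0 == bb j 0.
Definition TM (z : 'cV[R]_m) : 'M[R]_(n.+1, m) :=
  \matrix_(j, l) (if tight z j then Um j l else 0).
Definition ntset z := [set j | ~~ tight z j].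

Lemma step_dir z (v : 'cV[R]_m) j1 : feas z -> TM z *m v = 0 -> (Um *m v) j1 0 < 0 ->
  exists z', feas z' /\ ntset z' \proper ntset z.
Proof.
move=> fz TMv neg1.
have tight0 j : tight z j -> (Um *m v) j 0 = 0.
  move=> tj; move/matrixP: TMv => /(_ j 0); rewrite [RHS]mxE => <-; rewrite !mxE.
  by apply: eq_bigr => l _; rewrite !mxE tj.
pose ratio j := ((Um *m z) j 0 - bb j 0) / (- (Um *m v) j 0).
pose P := fun j => (Um *m v) j 0 < 0.
have P1 : P j1 by [].
case: (@arg_minP _ _ _ j1 P ratio P1) => j0 Pj0 minj0.
pose th := ratio j0.
have th0 : 0 <= th.
  rewrite /th /ratio divr_ge0 //; first by rewrite subr_ge0 fz.
  by rewrite oppr_ge0 ltW.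
pose z' := z + th *: v.
have Uz' j : (Um *m z') j 0 = (Um *m z) j 0 + th * (Um *m v) j 0.
  by rewrite /z' mulmxDr -scalemxAr !mxE.
exists z'; split.
  move=> j; rewrite Uz'.
  case: (ltrP ((Um *m v) j 0) 0) => hj.
    have := minj0 j hj; rewrite /ratio -/th => hth.
    have hpos : 0 < - (Um *m v) j 0 by rewrite oppr_gt0.
    rewrite ler_pdivlMr // mulrN in hth.
    have hth2 : - (th * (Um *m v) j 0) <= (Um *m z) j 0 - bb j 0 by exact: hth.
    have := fz j; lra.
  have := fz j; have : 0 <= th * (Um *m v) j 0 by rewrite mulr_ge0.
  lra.
apply/properP; split.
  apply/subsetP => j; rewrite !inE; apply: contra => tj.
  by rewrite /tight Uz' (tight0 _ tj) mulr0 addr0.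
exists j0.
  rewrite inE; apply/negP => /tight0 h; move: Pj0; rewrite /P h ltxx //.
rewrite inE negbK /tight Uz' /th /ratio.
have hne : (Um *m v) j0 0 != 0 by rewrite ltr0_neq0.
apply/eqP; field.
exact: hne.
Qed.

Lemma step z : feas z -> ~~ (wv <= TM z)%MS ->
  exists z', feas z' /\ ntset z' \proper ntset z.
Proof.
move=> fz; rewrite submxE => /matrix0Pn [i [l hl]].
pose v := col l (cokermx (TM z)).
have TMv : TM z *m v = 0 by rewrite /v colE mulmxA mulmx_coker mul0mx.
have wv_v : (wv *m v) 0 0 != 0.
  by rewrite /v colE mulmxA -colE mxE; rewrite (ord1 i) in hl.
have [j hj] : exists j, (Um *m v) j 0 != 0.
  apply/existsP; apply: contraR wv_v; rewrite negb_exists => /forallP h.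
  rewrite w_eq -mulmxA mxE big1 // => k _.
  by move: (h k); rewrite negbK => /eqP ->; rewrite mulr0.
case: (ltrP ((Um *m v) j 0) 0) => s.
  exact: step_dir fz TMv s.
apply: (@step_dir z (- v) j fz).
  by rewrite mulmxN TMv oppr0.
rewrite mulmxN mxE oppr_lt0 lt_def hj s //.
Qed.

Lemma vertex z0 : feas z0 -> exists z, feas z /\ (wv <= TM z)%MS.
Proof.
move=> f0.
suff H : forall N z, feas z -> (#|ntset z| <= N)%N ->
   exists z', feas z' /\ (wv <= TM z')%MS by exact: (H _ z0 f0 (leqnn _)).
elim=> [|N IH] z fz hN; case: (boolP (wv <= TM z)%MS) => h; try by exists z.
  by case: (step fz h) => z' [_ /proper_card pc]; move: (leq_trans pc hN).
case: (step fz h) => z' [fz' /proper_card pc]; apply: (IH z' fz').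
by rewrite -ltnS (leq_trans pc hN).
Qed.
End Goem.
Section Cram.
Variable R : realType.

Lemma sum_bnd (s : nat) (F : 'I_s -> R) (c : R) :
  (forall i, `|F i| <= c) -> `|\sum_i F i| <= s%:R * c.
Proof.
move=> h; apply: (le_trans (ler_norm_sum _ _ _)).
have -> : s%:R * c = \sum_(i < s) c by rewrite sumr_const card_ord mulr_natl.
by apply: ler_sum.
Qed.

Lemma det_bound s (M : 'M[R]_s) (c : R) : 0 <= c -> (forall i j, `|M i j| <= c) ->
  `|\det M| <= s`!%:R * c ^+ s.
Proof.
move=> c0 h; rewrite /determinant.
apply: (le_trans (ler_norm_sum _ _ _)).
have -> : s`!%:R * c ^+ s = \sum_(sg : 'S_s) c ^+ s.
  by rewrite sumr_const perm.card_Sn mulr_natl.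
apply: ler_sum => sg _.
rewrite normrM normrX normrN1 expr1n mul1r normr_prod.
have -> : c ^+ s = \prod_(i < s) c by rewrite prodr_const card_ord.
by apply: ler_prod => i _; rewrite normr_ge0 h.
Qed.

Lemma det_int s (M : 'M[R]_s) : (forall i j, M i j \is a Num.int) ->
  \det M \is a Num.int.
Proof.
move=> h; rewrite /determinant; apply: rpred_sum => sg _.
apply: rpredM; first by apply: rpredX; rewrite rpredN rpred1.
by apply: rpred_prod => i _.
Qed.

Lemma gram_unit p r (B : 'M[R]_(r, p)) : row_free B -> B *m B^T \in unitmx.
Proof.
move=> fB; rewrite -row_free_unit -kermx_eq0; apply/eqP.
apply/row_matrixP => i; rewrite row0.
set x := row i _.
have hx : x *m (B *m B^T) = 0.
  by apply/sub_kermxP; rewrite /x row_sub.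
have hxB : x *m B = 0.
  have : ((x *m B) *m (x *m B)^T) 0 0 = 0.
    by rewrite trmx_mul mulmxA -(mulmxA x) hx mul0mx mxE.
  move: (x *m B) => u; rewrite mxE => h0; apply/rowP => l; rewrite mxE.
  have hp : forall l', predT l' -> 0 <= u 0 l' * u^T l' 0.
    by move=> l' _; rewrite mxE -expr2 sqr_ge0.
  have := @psumr_eq0P _ _ predT (fun l => u 0 l * u^T l 0) hp h0 l isT.
  by rewrite mxE => /eqP; rewrite mulf_eq0 orbb => /eqP.
by apply: (row_free_inj fB); rewrite hxB mul0mx.
Qed.


Lemma cramer_gen p k (A : 'M[R]_(k, p)) (w : 'rV[R]_p) (z : 'cV[R]_p) :
  (forall i j, A i j \is a Num.int) -> (forall i j, `|A i j| <= 2) ->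
  (forall j, `|w 0 j| <= 1) -> (forall i, `|(A *m z) i 0| <= 1) ->
  (w <= A)%MS -> (0 < p)%N ->
  `|(w *m z) 0 0| <= (2 * p ^ 3 * p`! * (4 * p) ^ p)%:R.
Proof.
move=> Aint Ab wb Azb wA p0.
set r := \rank A.
have rp : (r <= p)%N by apply: rank_leq_col.
pose f := maxrankfun A.
pose B := rowsub f A.
have fB : row_free B := maxrowsub_free A.
have wB : (w <= B)%MS by rewrite (eq_maxrowsub A).
case/submxP: wB => nu wE.
pose G := B *m B^T.
have uG : G \in unitmx by apply: gram_unit.
have nuE : nu = (w *m B^T) *m invmx G by rewrite wE -(mulmxA nu) (mulmxK uG).
have wz : (w *m z) 0 0 = \sum_i nu 0 i * (A *m z) (f i) 0.
  rewrite wE -mulmxA mxE; apply: eq_bigr => i _; congr (_ * _).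
  by rewrite !mxE; apply: eq_bigr => l _; rewrite mxE.
have Bint i j : B i j \is a Num.int by rewrite mxE.
have Bb i j : `|B i j| <= 2 by rewrite mxE.
have Gint i j : G i j \is a Num.int.
  rewrite mxE; apply: rpred_sum => l _; rewrite !mxE; exact: (rpredM (Aint _ _) (Aint _ _)).
have Gb i j : `|G i j| <= (4 * p)%:R.
  rewrite mxE natrM mulrC; apply: sum_bnd => l; rewrite !mxE normrM.
  rewrite (_ : 4%:R = 2 * 2 :> R); last by rewrite -natrM.
  by apply: ler_pM; rewrite ?normr_ge0 ?Ab.
set K : R := (p`! * (4 * p) ^ p)%:R.
have K0 : 0 <= K by rewrite ler0n.
have detG : 1 <= `|\det G|.
  apply: norm_intr_ge1; first exact: det_int.
  by rewrite -unitfE -unitmxE.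
have invb i j : `|invmx G i j| <= K.
  rewrite /invmx uG mxE normrM normrV ?unitfE ?normr_eq0; last first.
    by rewrite -unitfE -unitmxE.
  have cof : `|\adj G i j| <= K.
    rewrite mxE /cofactor normrM normrX normrN1 expr1n mul1r.
    apply: (le_trans (det_bound (c := (4 * p)%:R) _ _)).
    - by rewrite ler0n.
    - by move=> a b; move: (Gb (lift j a) (lift i b)); rewrite !mxE.
    rewrite /K [in X in _ <= X]natrM [in X in _ <= X]natrX; apply: ler_pM.
    - by rewrite ler0n.
    - by rewrite exprn_ge0 // ler0n.
    - by rewrite ler_nat; apply: leq_fact; apply: leq_trans (leq_pred _) rp.
    apply: ler_weXn2l; first by rewrite ler1n muln_gt0 p0.
    exact: leq_trans (leq_pred _) rp.
  apply: le_trans cof; rewrite mulrC; apply: ler_piMr; first exact: normr_ge0.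
  by rewrite invf_le1 // (lt_le_trans ltr01 detG).
have wBb j : `|(w *m B^T) 0 j| <= p%:R * 2.
  rewrite mxE; apply: sum_bnd => l; rewrite mxE normrM -[2 in X in _ <= X]mul1r.
  by apply: ler_pM; rewrite ?normr_ge0 ?wb ?Bb.
have nub i : `|nu 0 i| <= r%:R * (p%:R * 2 * K).
  rewrite nuE mxE; apply: sum_bnd => j; rewrite normrM.
  by apply: ler_pM; rewrite ?normr_ge0 ?wBb ?invb.
rewrite wz; apply: le_trans (sum_bnd (c := r%:R * (p%:R * 2 * K)) _) _.
  move=> i; rewrite normrM -[X in _ <= X]mulr1.
  by apply: ler_pM; rewrite ?normr_ge0 ?nub ?Azb.
rewrite /K -!natrM ler_nat.
apply: (@leq_trans (p * (p * (p * 2 * (p`! * (4 * p) ^ p))))).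
  by apply: leq_mul rp (leq_mul rp (leqnn _)).
by rewrite !mulnA (mulnC _ 2) -!mulnA.
Qed.

End Cram.

Lemma bool_bnd (R : realType) (b1 b2 c : bool) :
  `|(b1%:R : R) - (if c then 2 * b2%:R else 0)| <= 2.
Proof. by rewrite ler_norml; case: b1; case: b2; case: c => /=; apply/andP; split; lra. Qed.

Lemma bool_bnd1 (R : realType) (b : bool) : `|(b%:R : R)| <= 1.
Proof. by case: b => /=; rewrite ?normr0 ?normr1. Qed.

Lemma goemans (R : realType) m n (y : nat -> bvec m) (a : 'I_m -> R) :
  (0 < m)%N ->
  (forall i, (i <= n)%N -> 0 < dotb a (y i)) ->
  (forall i, (i < n)%N -> 2 * dotb a (y i.+1) <= dotb a (y i)) ->
  2 ^+ n <= (2 * m ^ 3 * m`! * (4 * m) ^ m)%:R :> R.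
Proof.
move=> m0 pos half.
pose z0 : 'cV[R]_m := \col_l (a l / dotb a (y n)).
have Uz0 j : (Um R n y *m z0) j 0 =
   (dotb a (y j) - (if (j < n)%N then 2 * dotb a (y j.+1) else 0)) / dotb a (y n).
  rewrite mxE /dotb mulrBl; case: ifP => jn.
    rewrite mulr_sumr !mulr_suml -sumrB; apply: eq_bigr => l _.
    rewrite !mxE jn /dotb; field; rewrite gt_eqF //; exact: (pos n (leqnn n)).
  rewrite mul0r subr0 mulr_suml; apply: eq_bigr => l _.
  by rewrite !mxE jn subr0 /dotb; field; rewrite gt_eqF //; exact: (pos n (leqnn n)).
have f0 : feas n y z0.
  move=> j; rewrite Uz0 mxE; have pn := pos n (leqnn n).
  case: ifP => jn.
    have -> : (j == n :> nat) = false by apply/negbTE; rewrite neq_ltn jn.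
    by rewrite divr_ge0 ?subr_ge0 ?half // ltW.
  have jn' : val j = n by apply/eqP; rewrite eqn_leq -ltnS ltn_ord leqNgt jn.
  rewrite jn' eqxx.
  by rewrite subr0 divff // gt_eqF.
case: (vertex f0) => z [fz wT].
apply: le_trans (feas_lb fz) _.
apply: le_trans (ler_norm _) _.
apply: (@cramer_gen _ m n.+1 (TM n y z)) => //.
- move=> i j; rewrite mxE; case: ifP => _; last exact: rpred0.
  by rewrite mxE; apply: rpredB; [exact: rpred_nat | case: ifP => _; [apply: rpredM; exact: rpred_nat | exact: rpred0]].
- move=> i j; rewrite mxE; case: ifP => _; last by rewrite normr0 ler0n.
  by rewrite mxE; apply: bool_bnd.
- by move=> j; rewrite mxE; apply: bool_bnd1.
move=> i; rewrite mxE.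
have -> : \sum_j TM n y z i j * z j 0 = if tight y z i then (Um R n y *m z) i 0 else 0.
  case: ifP => ti; rewrite ?mxE.
    by apply: eq_bigr => l _; rewrite mxE ti.
  by apply: big1 => l _; rewrite mxE ti mul0r.
case: ifP => ti; last by rewrite normr0 ler01.
by move/eqP: ti => ->; rewrite mxE bool_bnd1.
Qed.

Section LandProof.
Variables (R : realType) (m : nat) (D : {set bvec m}) (c d : 'I_m -> R).
Variable O : R -> bvec m.
Hypothesis Dn0 : D != set0.
Hypothesis dpos : forall x, x \in D -> 0 < dotb d x.
Hypothesis orc : lin_oracle D c d O.

Local Notation f := (fmin D c d).

Lemma lfvalE δ x : lfval c d δ x = dotb c x - δ * dotb d x.
Proof.
rewrite /lfval /dotb mulr_sumr -sumrB; apply: eq_bigr => i _.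
by rewrite mulrBl mulrA.
Qed.

Lemma OD δ : O δ \in D. Proof. by case: (orc δ). Qed.

Lemma fminE δ : f δ = lfval c d δ (O δ).
Proof.
rewrite /fmin; case: pickP => [x0 Hx0|].
  apply/eqP; rewrite eq_le; apply/andP; split.
    rewrite (bigD1 (O δ)) ?OD //=; by rewrite ge_min lexx.  
  apply: (@big_ind _ (fun v => lfval c d δ (O δ) <= v)).
  - by case: (orc δ) => _ /(_ x0 Hx0).
  - by move=> u v hu hv; rewrite le_min hu hv.
  - by move=> x Hx; case: (orc δ) => _ /(_ x Hx).
by move=> /(_ (O δ)); rewrite OD.
Qed.

Lemma fmin_le δ x : x \in D -> f δ <= lfval c d δ x.
Proof. by move=> Hx; rewrite fminE; case: (orc δ) => _ /(_ x Hx). Qed.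

Definition rho x := dotb c x / dotb d x.

Lemma Dex : exists x0, x0 \in D.
Proof. by case/set0Pn: Dn0 => x Hx; exists x. Qed.

Definition x00 : bvec m := odflt (O 0) [pick x in D].
Lemma x00D : x00 \in D.
Proof. by rewrite /x00; case: pickP => //=; rewrite OD. Qed.

Definition xs := [arg min_(x < x00 in D) rho x]%O.
Definition ds := rho xs.

Lemma xsD : xs \in D.
Proof. by rewrite /xs; case: arg_minP => //; exact: x00D. Qed.

Lemma ds_min x : x \in D -> ds <= rho x.
Proof. by move=> Hx; rewrite /ds /xs; case: arg_minP => //; [exact: x00D | move=> y _; apply]. Qed.

Definition av i := c i - ds * d i.

Lemma lfval_a δ x : lfval c d δ x = dotb av x - (δ - ds) * dotb d x.
Proof.
rewrite lfvalE /dotb /av !mulr_sumr -!sumrB; apply: eq_bigr => i _; ring.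
Qed.

Lemma dotb_av x : dotb av x = dotb c x - ds * dotb d x.
Proof. by have := lfval_a ds x; rewrite subrr mul0r subr0 lfvalE. Qed.

Lemma av_ge0 x : x \in D -> 0 <= dotb av x.
Proof.
move=> Hx; rewrite dotb_av; have := ds_min Hx; rewrite /rho.
have dx := dpos Hx; rewrite ler_pdivlMr // => h; lra.
Qed.

Lemma av_xs : dotb av xs = 0.
Proof.
rewrite dotb_av /ds /rho; have dx := dpos xsD.
by field; rewrite gt_eqF.
Qed.

Lemma f_lt0 δ : (f δ < 0) = (ds < δ).
Proof.
case: (ltrP ds δ) => h.
  apply: (le_lt_trans (fmin_le _ xsD)); rewrite lfval_a av_xs.
  have := dpos xsD; rewrite add0r oppr_lt0 => hd; by rewrite mulr_gt0 // subr_gt0.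
rewrite fminE lfval_a; apply/negbTE; rewrite -leNgt.
have := av_ge0 (OD δ); have := dpos (OD δ).
have : 0 <= ds - δ by rewrite subr_ge0.
move=> h1 h2 h3; have : 0 <= (ds - δ) * dotb d (O δ) by rewrite mulr_ge0 // ltW.
lra.
Qed.

Lemma f_ds : f ds = 0.
Proof.
apply/eqP; rewrite eq_le; apply/andP; split.
  by have := fmin_le ds xsD; rewrite lfval_a av_xs subrr mul0r subr0.
by rewrite leNgt f_lt0 ltxx.
Qed.

Lemma f_le0 δ : (f δ <= 0) = (ds <= δ).
Proof.
case: (ltrP ds δ) => h.
  have : f δ < 0 by rewrite f_lt0.
  by move/ltW => ->; rewrite (ltW h).
case: (eqVneq δ ds) => [->|ne]; first by rewrite f_ds !lexx.
have hl : δ < ds by rewrite lt_neqAle ne h.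
have -> : (ds <= δ) = false by apply/negbTE; rewrite -ltNge.
apply/negbTE; rewrite -ltNge fminE lfval_a.
have := av_ge0 (OD δ); have := dpos (OD δ).
have : 0 < ds - δ by rewrite subr_gt0.
move=> h1 h2 h3; have : 0 < (ds - δ) * dotb d (O δ) by rewrite mulr_gt0.
lra.
Qed.


Definition Gd δ := dotb d (O δ).
Definition Ph δ := dotb av (O δ).

Lemma fE δ : f δ = Ph δ - (δ - ds) * Gd δ.
Proof. by rewrite fminE lfval_a. Qed.

Lemma Gpos δ : 0 < Gd δ. Proof. exact: dpos (OD δ). Qed.
Lemma Ph_ge0 δ : 0 <= Ph δ. Proof. exact: av_ge0 (OD δ). Qed.

Lemma G_mono δ' δ : δ' <= δ -> Gd δ' <= Gd δ.
Proof.
move=> h; case: (eqVneq δ' δ) => [->//|ne].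
have hl : 0 < δ - δ' by rewrite subr_gt0 lt_neqAle ne h.
have h1 : lfval c d δ' (O δ') <= lfval c d δ' (O δ) by case: (orc δ') => _; apply; apply: OD.
have h2 : lfval c d δ (O δ) <= lfval c d δ (O δ') by case: (orc δ) => _; apply; apply: OD.
rewrite !lfvalE in h1 h2.
have : (δ - δ') * Gd δ' <= (δ - δ') * Gd δ by rewrite /Gd; nra.
by rewrite ler_pM2l.
Qed.

Lemma tangent δ δ' : Ph δ - (δ - ds) * Gd δ <= Ph δ' - (δ - ds) * Gd δ'.
Proof.
have h : lfval c d δ (O δ) <= lfval c d δ (O δ') by case: (orc δ) => _; apply; apply: OD.
by rewrite !lfval_a in h.
Qed.

Lemma gE δ : LAND_g d O δ = - Gd δ. Proof. by []. Qed.

Lemma nextE s : LAND_next D c d O s =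
  let δ := s.1 - f s.1 / s.2 in let δ' := 2 * δ - s.1 in
  if ds < δ' then (δ', LAND_g d O δ') else (δ, LAND_g d O δ).
Proof.
rewrite /LAND_next /LAND_f /=.
by rewrite f_lt0 gE oppr_lt0 Gpos andbT.
Qed.


Variables (δ1 g1 : R).
Hypothesis hf1 : f δ1 <= 0.
Hypothesis hsg : is_supergrad f δ1 g1.
Hypothesis hg1 : g1 < 0.

Definition st k := LAND_state D c d O (δ1, g1) k.
Definition newt (s : R * R) := s.1 - f s.1 / s.2.

Lemma stS k : st k.+1 = LAND_next D c d O (st k). Proof. by []. Qed.

Lemma newt_oracle δ : newt (δ, LAND_g d O δ) = ds + Ph δ / Gd δ.
Proof.
rewrite /newt /= gE fE; have := Gpos δ => hG.
by field; rewrite gt_eqF.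
Qed.

Lemma inv k : ds <= (st k).1 /\ ((0 < k)%N -> (st k).2 = LAND_g d O (st k).1).
Proof.
elim: k => [|k [IH1 IH2]]; first by split => //; rewrite -f_le0.
have hN : ds <= newt (st k).
  case: k IH1 IH2 => [|k] IH1 IH2.
    rewrite -f_le0 /newt /=; apply: (le_trans (hsg _)).
    have hg : g1 != 0 by rewrite lt_eqF.
    rewrite (_ : f δ1 + g1 * (δ1 - f δ1 / g1 - δ1) = 0) //; field; exact: hg.
  have -> : st k.+1 = ((st k.+1).1, LAND_g d O (st k.+1).1).
    by rewrite -IH2 //; case: (st k.+1).
  rewrite newt_oracle lerDl; apply: divr_ge0; [exact: Ph_ge0 | exact: ltW (Gpos _)].
rewrite stS nextE /=; split; last by case: ifP.
by case: ifP => [h|_] /=; [exact: ltW | exact: hN].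
Qed.

Lemma st_ge k : ds <= (st k).1. Proof. by case: (inv k). Qed.
Lemma st_g k : (0 < k)%N -> st k = ((st k).1, LAND_g d O (st k).1).
Proof. by case: (inv k) => _ h /h <-; case: (st k). Qed.


Definition tt k := (st k).1 - ds.
Definition GG k := Gd (st k).1.
Definition PP k := Ph (st k).1.
Definition ee k := PP k / GG k.

Lemma GG_pos k : 0 < GG k. Proof. exact: Gpos. Qed.
Lemma PP_ge0 k : 0 <= PP k. Proof. exact: Ph_ge0. Qed.
Lemma tt_ge0 k : 0 <= tt k. Proof. by rewrite subr_ge0 st_ge. Qed.
Lemma ee_ge0 k : 0 <= ee k. Proof. by rewrite divr_ge0 ?PP_ge0 // ltW // GG_pos. Qed.

Lemma fst k : f (st k).1 = PP k - tt k * GG k. Proof. by rewrite fE. Qed.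

Lemma ee_le k : ee k <= tt k.
Proof.
have := st_ge k; rewrite -f_le0 fst => h.
by rewrite /ee ler_pdivrMr ?GG_pos //; lra.
Qed.

Lemma ee_lt k : f (st k).1 < 0 -> ee k < tt k.
Proof.
rewrite fst => h.
by rewrite /ee ltr_pdivrMr ?GG_pos //; lra.
Qed.

Lemma t_next k : (0 < k)%N ->
  tt k.+1 = if 0 < 2 * ee k - tt k then 2 * ee k - tt k else ee k.
Proof.
move=> k0; rewrite /tt stS.
set δ := (st k).1.
have sk : st k = (δ, LAND_g d O δ) by exact: st_g.
have hN := newt_oracle δ; rewrite /newt /= in hN.
rewrite sk nextE /= hN /ee /PP /GG -/δ.
have -> : (ds < 2 * (ds + Ph δ / Gd δ) - δ) = (0 < 2 * (Ph δ / Gd δ) - (δ - ds)).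
  by apply/idP/idP => h; lra.
by case: ifP => _ /=; ring.
Qed.

Lemma A_le k : (0 < k)%N -> tt k.+1 <= ee k.
Proof.
move=> k0; rewrite t_next //; case: ifP => _ //.
have := ee_le k; lra.
Qed.

Lemma st_dec k : (0 < k)%N -> (st k.+1).1 <= (st k).1.
Proof.
move=> k0; have := A_le k0; have := ee_le k; rewrite /tt; lra.
Qed.

Lemma B_le k : (0 < k)%N -> GG k.+1 <= GG k.
Proof. by move=> k0; apply: G_mono; apply: st_dec. Qed.

Lemma C_le k : PP k <= tt k * GG k.
Proof. have := st_ge k; rewrite -f_le0 fst; lra. Qed.

Lemma mono k : (0 < k)%N -> PP k.+1 <= PP k.
Proof.
move=> k0; apply: (le_trans (C_le k.+1)).
have -> : PP k = ee k * GG k by rewrite /ee mulrVK // unitfE gt_eqF // GG_pos.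
apply: ler_pM; rewrite ?tt_ge0 ?A_le ?B_le //; exact: ltW (GG_pos _).
Qed.


Lemma PPe k : PP k = ee k * GG k.
Proof. by rewrite /ee mulrVK // unitfE gt_eqF // GG_pos. Qed.

Lemma acc k : (0 < k)%N -> f (st k).1 < 0 -> 0 < 2 * ee k - tt k ->
  2 * PP k.+1 <= PP k.
Proof.
move=> k0 fk hc.
have ht' : tt k.+1 = 2 * ee k - tt k by rewrite t_next // hc.
have h1 : PP k - tt k * GG k <= PP k.+1 - tt k * GG k.+1 by apply: tangent.
have h2 := C_le k.+1.
have he := ee_lt fk.
have hP := PPe k.
have t'0 := tt_ge0 k.+1.
have t0 := tt_ge0 k.
have G0 := GG_pos k.
have G'0 := GG_pos k.+1.
move: h1 h2 he hP t'0 t0 ht' G0 G'0.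
set P := PP k; set P' := PP k.+1; set G := GG k; set G' := GG k.+1.
set t := tt k; set t' := tt k.+1; set e := ee k.
move=> h1 h2 he hP t'0 t0 ht' G0 G'0.
have H3 : t * P' <= t' * (P' - P + t * G) by nra.
have H4 : 2 * P' * (t - e) <= t' * G * (t - e) by nra.
have H5 : 2 * P' <= t' * G.
  by rewrite -(ler_pM2r (_ : 0 < t - e)) ?subr_gt0.
have : t' * G <= e * G by rewrite ler_pM2r //; lra.
lra.
Qed.

Lemma rej k : (0 < k)%N -> ~~ (0 < 2 * ee k.+1 - tt k.+1) ->
  2 * PP k.+1 <= PP k.
Proof.
move=> k0; rewrite -leNgt => hc.
rewrite PPe (PPe k).
have : ee k.+1 * GG k.+1 * 2 <= tt k.+1 * GG k.+1.
  by rewrite -mulrA (mulrC _ 2) mulrA ler_pM2r ?GG_pos //; lra.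
have : tt k.+1 * GG k.+1 <= ee k * GG k.
  apply: ler_pM; rewrite ?tt_ge0 ?A_le ?B_le //; exact: ltW (GG_pos _).
lra.
Qed.

Lemma two_step k : (0 < k)%N -> f (st k.+1).1 < 0 -> 2 * PP k.+2 <= PP k.
Proof.
move=> k0 fk1.
case: (boolP (0 < 2 * ee k.+1 - tt k.+1)) => hc.
  have := acc (ltn0Sn k) fk1 hc; have := mono k0; lra.
have := rej k0 hc; have := mono (ltn0Sn k); lra.
Qed.

Lemma posit k : (0 < k)%N -> f (st k.+1).1 < 0 -> 0 < PP k.
Proof.
move=> k0; rewrite f_lt0 => h.
have : 0 < tt k.+1 by rewrite /tt subr_gt0.
have := A_le k0 => h1 h2.
rewrite PPe mulr_gt0 ?GG_pos //; lra.
Qed.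


Lemma no_long N : (0 < m)%N -> (forall j, (j <= N)%N -> f (st j).1 < 0) ->
  forall n, (2 * n + 2 <= N)%N ->
  2 ^+ n <= (2 * m ^ 3 * m`! * (4 * m) ^ m)%:R :> R.
Proof.
move=> m0 hneg n hn.
apply: (@goemans R m n (fun i => O (st (2 * i + 1)).1) av m0).
  move=> i hi; apply: (@posit (2 * i + 1)); first by rewrite addn1.
  by rewrite addn1; apply: hneg; lia.
move=> i hi.
have h1 : (0 < 2 * i + 1)%N by rewrite addn1.
have h2 : f (st (2 * i + 1).+1).1 < 0 by apply: hneg; lia.
have := two_step h1 h2.
by rewrite /PP (_ : (2 * i + 1).+2 = 2 * i.+1 + 1)%N //; lia.
Qed.

End LandProof.

Lemma fact_le_exp n : (n`! <= n ^ n)%N.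
Proof.
elim: n => // n IH; rewrite factS expnS; apply: leq_mul => //.
apply: leq_trans IH _; case: n => // n; rewrite leq_exp2r //.
Qed.

Lemma bnd_nat m : (2 <= m)%N -> (2 * m ^ 3 * m`! * (4 * m) ^ m <= m ^ (6 * m))%N.
Proof.
move=> m2.
have m0 : (0 < m)%N by apply: leq_trans m2.
have h1 : (2 * m ^ 3 <= m ^ 4)%N by rewrite (expnS m 3) leq_mul.
have h2 := fact_le_exp m.
have h3 : ((4 * m) ^ m <= (m ^ 3) ^ m)%N.
  rewrite leq_exp2r // (expnS m 2) mulnC leq_mul //.
  by rewrite (_ : 4 = 2 ^ 2)%N // leq_exp2r.
apply: (@leq_trans (m ^ 4 * m ^ m * (m ^ 3) ^ m)).
  by rewrite leq_mul // leq_mul.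
by rewrite -expnM -!expnD leq_pexp2l //; lia.
Qed.

Theorem theorem3p6 (R : realType) :
  exists C : R, forall (m : nat), (2 <= m)%N ->
  forall (D : {set bvec m}) (c d : 'I_m -> R),
    D != set0 ->
    (forall x, x \in D -> 0 < dotb d x) ->
  forall (O : R -> bvec m), lin_oracle D c d O ->
  forall delta1 g1 : R,
    fmin D c d delta1 <= 0 ->
    is_supergrad (fmin D c d) delta1 g1 ->
    g1 < 0 ->
    exists k : nat,
      (k.+1)%:R <= C * m%:R * ln (m%:R : R) /\
      LAND_returns D c d O (LAND_state D c d O (delta1, g1) k).
Proof.
exists (40 / ln (2 : R)).
move=> m m2 D c d Dn0 dpos O orc δ1 g1 hf1 hsg hg1.
have m0 : (0 < m)%N by apply: leq_trans m2.
set U := up_log 2 m.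
set n0 := (6 * m * U + 1)%N.
set N := (2 * n0 + 2)%N.
have kb : forall k, (k <= N)%N -> (k.+1)%:R <= 40 / ln 2 * m%:R * ln (m%:R : R).
  move=> k hk.
  have l2 : 0 < ln (2 : R) by apply: ln_gt0; rewrite ltr1n.
  have M2 : 2 <= (m%:R : R) by rewrite ler_nat.
  have lm : ln (2 : R) <= ln (m%:R : R).
    by rewrite ler_ln // posrE // (lt_le_trans _ M2).
  have U1 : (0 < U)%N by rewrite up_log_gt0.
  have hU : U%:R * ln (2 : R) <= 2 * ln (m%:R : R).
    have g := up_log_gtn (isT : (1 < 2)%N) m2.
    have : ln ((2 : R) ^+ U.-1) < ln (m%:R : R).
      rewrite ltr_ln ?posrE ?exprn_gt0 ?ltr0n //.
      by rewrite -natrX ltr_nat.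
    rewrite lnXn // -[X in X < _]mulr_natr.
    have -> : (U%:R : R) = U.-1%:R + 1 by rewrite -[in LHS](prednK U1) -natr1.
    lra.
  have hk' : ((k.+1)%:R : R) <= 12 * m%:R * U%:R + 5.
    have : (k.+1 <= 12 * m * U + 5)%N by rewrite /N /n0 in hk; lia.
    rewrite -(ler_nat R) => h; apply: (le_trans h).
    by rewrite natrD !natrM.
  apply: (le_trans hk').
  have -> : 40 / ln 2 * m%:R * ln (m%:R : R) = (40 * m%:R * ln (m%:R : R)) / ln (2:R).
    by field; rewrite gt_eqF.
  rewrite ler_pdivlMr //.
  set M := (m%:R : R); set L := ln M; set l := ln (2 : R).
  have H1 : M * (U%:R * l) <= M * (2 * L) by rewrite ler_wpM2l // (le_trans _ M2).
  have H2 : 0 <= L by apply: (le_trans (ltW l2)).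
  have H3 : L <= M * L by rewrite ler_peMl //; apply: (le_trans _ M2); rewrite ler1n.
  have H4 : (12 * M * U%:R + 5) * l = 12 * (M * (U%:R * l)) + 5 * l by ring.
  rewrite H4 -mulrA.
  have H1' : M * (U%:R * l) <= 2 * (M * L) by move: H1; rewrite [M * (2 * L)]mulrCA.
  move: H1' H3 lm; rewrite -/l -/L; move: (M * (U%:R * l)) (M * L) => A B; lra.
case: (boolP [exists j : 'I_N.+1, LAND_returns D c d O (LAND_state D c d O (δ1, g1) j)]).
  case/existsP => j hj; exists j; split => //; apply: kb; by rewrite -ltnS ltn_ord.
rewrite negb_exists => /forallP hall; exfalso.
have hneg : forall j, (j <= N)%N -> fmin D c d (st D c d O δ1 g1 j).1 < 0.
  move=> j hj; have := hall (Ordinal (hj : (j < N.+1)%N)).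
  rewrite /LAND_returns negb_or => /andP [h _].
  rewrite lt_neqAle h /= (f_le0 dpos orc).
  exact: (st_ge dpos orc hf1 hsg hg1).
have := no_long Dn0 dpos orc hf1 hsg hg1 m0 hneg (leqnn _ : (2 * n0 + 2 <= N)%N).
rewrite -natrX ler_nat => hb.
have := leq_trans hb (bnd_nat m2).
apply/negP; rewrite -ltnNge.
apply: (@leq_ltn_trans ((2 ^ U) ^ (6 * m))).
  by rewrite leq_exp2r ?muln_gt0 // up_logP.
by rewrite -expnM ltn_exp2l // /n0 addn1 ltnS mulnC.
Qed.
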